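(* Let $n\ge1$ and let $B\in\mathcal S(\mathbb C^n,\mathbb C)$ satisfy $\log(1-BB^* )\in L^1(\mathbb T)$. Let $a\in\mathcal S(\mathbb C,\mathbb C)$ be an outer function with $\sum_{j=1}^n|b_j(\zeta)|^2+|a(\zeta)|^2=1$ for a.e. $\zeta\in\mathbb T$, and let $A:\mathbb D\to\mathcal L(\mathbb C^n,\mathbb C^n)$ be an outer function with $B(\zeta)^*B(\zeta)+A(\zeta)^*A(\zeta)=I$ for a.e. $\zeta\in\mathbb T$. Then $$B(\zeta)\big(A(\zeta)^*A(\zeta)\big)^{-1}B(\zeta)^*=\frac{B(\zeta)B(\zeta)^*}{|a(\zeta)|^2}\quad\text{for a.e. }\zeta\in\mathbb T.$$
   Context: $\mathbb D$ is the open unit disc, $\mathbb T$ the unit circle. $\mathcal S(\mathbb C^n,\mathbb C)$ is the set of holomorphic maps $B=(b_1,\dots,b_n):\mathbb D\to\mathcal L(\mathbb C^n,\mathbb C)$ (row vectors) with $\sup_{z\in\mathbb D}\|B(z)\|\le1$; boundary values on $\mathbb T$ are taken a.e. A scalar $a\in H^\infty$ is outer in the usual sense; a bounded holomorphic $A:\mathbb D\to\mathcal L(\mathbb C^n,\mathbb C^n)$ is outer if $\{Ap: p\text{ a }\mathbb C^n\text{-valued polynomial}\}$ is dense in the Hardy space $H^2_{\mathbb C^n}$. *)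

(* Defs.v *)
From HB Require Import structures.
From mathcomp Require Import all_boot all_order all_algebra.
From mathcomp Require Import all_classical all_reals all_analysis.
From mathcomp Require Import complex.
Import Order.TTheory GRing.Theory Num.Theory.
Import numFieldNormedType.Exports.

Set Implicit Arguments.
Unset Strict Implicit.
Unset Printing Implicit Defensive.

Local Open Scope classical_set_scope.
Local Open Scope ring_scope.
Local Notation lte := (@Order.lt _ (\bar _)).

(* The complex numbers over a real type R, viewed as a numeric closed field
   (hence a normed module over itself, so that [derivable] is complex
   differentiability). *)
Definition Cplx (R : realType) : numClosedFieldType := R[i].

Section Defs.
Variable R : realType.
Local Notation C := (Cplx R).

Definition disc : set C := [set z | `|z| < 1].

Definition expi (t : R) : C := (cos t +i* sin t)%C.

Definition cabs2 (z : C) : R := (complex.Re z) ^+ 2 + (complex.Im z) ^+ 2.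

Definition holo_on_disc (f : C -> C) : Prop :=
  forall z, disc z -> derivable f z 1.

Definition holo_mx {m k : nat} (F : C -> 'M[C]_(m, k)) : Prop :=
  forall i j, holo_on_disc (fun z => F z i j).

Definition bounded_mx {m k : nat} (F : C -> 'M[C]_(m, k)) : Prop :=
  exists M : R, forall z, disc z -> forall i j, `|F z i j| <= (M%:C)%C.

Definition adjmx {m k : nat} (A : 'M[C]_(m, k)) : 'M[C]_(k, m) :=
  (map_mx Num.conj A)^T.

Definition bv (f : C -> C) (t : R) : C :=
  lim (f ((r%:C)%C * expi t) @[r --> (1 : R)^'-]).

Definition bvmx {m k : nat} (F : C -> 'M[C]_(m, k)) (t : R) : 'M[C]_(m, k) :=
  \matrix_(i, j) bv (fun z => F z i j) t.

(* "for a.e. zeta in T", zeta = e^{it}, t in [0, 2 pi], Lebesgue measure *)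
Definition ae_circle (P : R -> Prop) : Prop :=
  \forall t \ae (@lebesgue_measure R), t \in `[0, 2 * pi] -> P t.

Definition logE (x : R) : \bar R := if 0 < x then (ln x)%:E else -oo%E.

Definition L1_circle (f : R -> \bar R) : Prop :=
  (@lebesgue_measure R).-integrable `[0, 2 * pi] f.

(* Schur class S(C^n, C): holomorphic row vectors with operator norm <= 1 *)
Definition schur_row (n : nat) (B : C -> 'rV[C]_n) : Prop :=
  holo_mx B /\ forall z, disc z -> \sum_(j < n) cabs2 (B z ord0 j) <= 1.

Definition schur_scalar (a : C -> C) : Prop :=
  holo_on_disc a /\ forall z, disc z -> `|a z| <= 1.

Definition mean2 (n : nat) (f : C -> 'cV[C]_n) (r : R) : \bar R :=
  ((2 * pi)^-1)%:E *
  (\int[(@lebesgue_measure R)]_(t in `[0%R, (2 * pi)%R])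
      (\sum_(i < n) cabs2 (f ((r%:C)%C * expi t) i ord0))%:E)%E.

Definition H2norm2 (n : nat) (f : C -> 'cV[C]_n) : \bar R :=
  ereal_sup [set mean2 f r | r in `[0, 1[ ].

Definition in_H2 (n : nat) (f : C -> 'cV[C]_n) : Prop :=
  holo_mx f /\ lte (H2norm2 f) +oo%E.

Definition poly_ev (n : nat) (p : 'I_n -> {poly C}) (z : C) : 'cV[C]_n :=
  \col_i (p i).[z].

Definition outer_mx (n : nat) (A : C -> 'M[C]_n) : Prop :=
  [/\ holo_mx A, bounded_mx A &
      forall f : C -> 'cV[C]_n, in_H2 f -> forall eps : R, 0 < eps ->
        exists p : 'I_n -> {poly C},
          lte (H2norm2 (fun z => (A z *m poly_ev p z - f z)%R)) eps%:E].

Definition outer_scalar (a : C -> C) : Prop :=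
  outer_mx (n := 1) (fun z => (a z)%:M).

End Defs.

(* Main.v *)
Require Import Defs.
From HB Require Import structures.
From mathcomp Require Import all_boot all_order all_algebra.
From mathcomp Require Import all_classical all_reals all_analysis.
From mathcomp Require Import complex.
From mathcomp Require Import ring.
Import Order.TTheory GRing.Theory Num.Theory.
Import numFieldNormedType.Exports.
Local Open Scope classical_set_scope.
Local Open Scope ring_scope.

Lemma key (R : realType) n (b : 'rV[Cplx R]_n) (Am : 'M[Cplx R]_n) (al : Cplx R) :
  \sum_(j < n) `|b ord0 j| ^+ 2 + `|al| ^+ 2 = 1 ->
  adjmx b *m b + adjmx Am *m Am = 1%:M ->
  (b *m invmx (adjmx Am *m Am) *m adjmx b) ord0 ord0
    = (b *m adjmx b) ord0 ord0 / `|al| ^+ 2.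
Proof.
set u := adjmx b; set M := adjmx Am *m Am; set s := (b *m u) ord0 ord0.
move=> hs hM.
have Hs : \sum_(j < n) `|b ord0 j| ^+ 2 = s.
  rewrite /s mxE; apply: eq_bigr => j _.
  by rewrite /u /adjmx !mxE normCK.
have Ha : `|al| ^+ 2 = 1 - s by rewrite -hs Hs addrC addKr.
have HM : M = 1%:M - u *m b by rewrite -hM addrC addKr.
have bu : b *m u = s%:M by rewrite [LHS]mx11_scalar.
rewrite Ha.
have [s1|s1] := eqVneq s 1.
  have Mu : M *m u = 0.
    by rewrite HM mulmxBl mul1mx -mulmxA bu s1 mulmx1 subrr.
  have Mn : M \notin unitmx.
    apply/negP => Mun.
    have u0 : u = 0 by rewrite -(mulKmx Mun u) Mu mulmx0.
    have : s = 0 by rewrite /s u0 mulmx0 mxE.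
    by rewrite s1 => /eqP; rewrite oner_eq0.
  rewrite invmx_out //. rewrite s1 subrr invr0 mulr0 HM mulmxBr mulmx1 mulmxBl.
  by rewrite -!mulmxA bu mulmxA bu s1 mul1mx subrr mxE.
have c0 : 1 - s != 0 by rewrite subr_eq0 eq_sym.
set N := 1%:M + (1 - s)^-1 *: (u *m b).
have MN : M *m N = 1%:M.
  rewrite HM /N mulmxDr mulmx1 mulmxBl mul1mx -scalemxAr mulmxA.
  rewrite -(mulmxA u b u) bu -mulmxA mul_scalar_mx -scalemxAr scalerA.
  rewrite -scalerBl -[X in (X - _ * s) *: _]mulr1 -mulrBr.
  by rewrite mulVf // scale1r subrK.
have Mun : M \in unitmx by case: (mulmx1_unit MN).
have -> : invmx M = N by rewrite -[LHS]mulmx1 -MN mulmxA mulVmx // mul1mx.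
rewrite /N mulmxDr mulmx1 mulmxDl bu -scalemxAr -scalemxAl mulmxA bu -mulmxA bu mul_scalar_mx !mxE eqxx !mulr1n.
by field.
Qed.

Theorem lemma4p3 (R : realType) (n : nat) (hn : (0 < n)%N)
  (B : Cplx R -> 'rV[Cplx R]_n) (a : Cplx R -> Cplx R)
  (A : Cplx R -> 'M[Cplx R]_n) :
  schur_row B ->
  L1_circle (fun t => logE (1 - \sum_(j < n) cabs2 (bvmx B t ord0 j))) ->
  schur_scalar a -> outer_scalar a ->
  ae_circle (fun t =>
    \sum_(j < n) `|bvmx B t ord0 j| ^+ 2 + `|bv a t| ^+ 2 = 1) ->
  outer_mx A ->
  ae_circle (fun t =>
    adjmx (bvmx B t) *m bvmx B t + adjmx (bvmx A t) *m bvmx A t = 1%:M) ->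
  ae_circle (fun t =>
    (bvmx B t *m invmx (adjmx (bvmx A t) *m bvmx A t) *m adjmx (bvmx B t))
      ord0 ord0
    = (bvmx B t *m adjmx (bvmx B t)) ord0 ord0 / `|bv a t| ^+ 2).
Proof.
move=> _ _ _ _ h1 _ h2; move: h1 h2; rewrite /ae_circle => h1.
apply: filter_app; first exact: (ae_filter_ringOfSetsType (@lebesgue_measure R)).
move: h1; apply: filterS; first exact: (ae_filter_ringOfSetsType (@lebesgue_measure R)).
move=> t H1 H2 Ht.
exact: key (H1 Ht) (H2 Ht).
Qed.
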